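(* The formula $\mathsf F(p\Rightarrow\mathsf X p)$ (for $p\in\mathbb P$) is falsifiable on some bi-relational model, but in every bi-relational model $(W,T,\le,S,[\![\cdot]\!])$ in which it is falsified (i.e. $[\![\mathsf F(p\Rightarrow\mathsf Xp)]\!]\neq W\times T$), both $W$ and $T$ are infinite. Consequently none of the following properties holds: (strong FMP) every formula falsifiable on a bi-relational model is falsifiable on one with $W$ and $T$ finite; (order FMP) ... on one with $W$ finite; (temporal FMP) ... on one with $T$ finite.
   Context: Fix a countably infinite set $\mathbb P$ of propositional variables. The language $\mathcal L$ is given by $\varphi,\psi ::= p \mid \varphi\wedge\psi \mid \varphi\vee\psi \mid \varphi\Rightarrow\psi \mid \varphi\Leftarrow\psi \mid \mathsf X\varphi \mid \mathsf Y\varphi \mid \mathsf G\varphi \mid \mathsf H\varphi \mid \varphi\,\mathsf U\,\psi \mid \varphi\,\mathsf S\,\psi$; $\top:=p_0\Rightarrow p_0$ for fixed $p_0$, and $\mathsf F\varphi:=\top\,\mathsf U\,\varphi$. A bi-relational frame is $(W,T,\le,S)$ with $(W,\le)$ a linear order and $S\colon T\to T$ a bijection. A bi-relational model adds a valuation $[\![\cdot]\!]\colon\mathcal L\to 2^{W\times T}$ with each $[\![p]\!]$ downward closed in the first coordinate and: $[\![\varphi\wedge\psi]\!]=[\![\varphi]\!]\cap[\![\psi]\!]$; $[\![\varphi\vee\psi]\!]=[\![\varphi]\!]\cup[\![\psi]\!]$; $(w,t)\in[\![\varphi\Rightarrow\psi]\!]$ iff for all $v\le w$, $(v,t)\in[\![\varphi]\!]$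 implies $(v,t)\in[\![\psi]\!]$; $(w,t)\in[\![\varphi\Leftarrow\psi]\!]$ iff some $v\ge w$ has $(v,t)\in[\![\varphi]\!]\setminus[\![\psi]\!]$; $(w,t)\in[\![\mathsf X\varphi]\!]$ iff $(w,S(t))\in[\![\varphi]\!]$; $(w,t)\in[\![\mathsf Y\varphi]\!]$ iff $(w,S^{-1}(t))\in[\![\varphi]\!]$; $(w,t)\in[\![\mathsf G\varphi]\!]$ iff $(w,S^n(t))\in[\![\varphi]\!]$ for all $n\ge0$; $\mathsf H$ dually with $S^{-n}$; $(w,t)\in[\![\varphi\,\mathsf U\,\psi]\!]$ iff there is $n\ge0$ with $(w,S^i(t))\in[\![\varphi]\!]$ for $i<n$ and $(w,S^n(t))\in[\![\psi]\!]$; $\mathsf S$ dually with $S^{-i}$. A formula is falsifiable on a model if $[\![\varphi]\!]\ne W\times T$. *)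

(* Defs.v *)
From Stdlib Require Import List.

Inductive form : Type :=
| Var : nat -> form
| And : form -> form -> form
| Or : form -> form -> form
| Imp : form -> form -> form
| Coimp : form -> form -> form
| Next : form -> form
| Prev : form -> form
| Glob : form -> form
| Hist : form -> form
| Until : form -> form -> form
| Since : form -> form -> form.

Definition Top : form := Imp (Var 0) (Var 0).
Definition Fut (phi : form) : form := Until Top phi.

Record biframe := {
  W : Type;
  T : Type;
  le : W -> W -> Prop;
  le_refl : forall w, le w w;
  le_trans : forall u v w, le u v -> le v w -> le u w;
  le_antisym : forall u v, le u v -> le v u -> u = v;
  le_total : forall u v, le u v \/ le v u;
  S : T -> T;
  Sinv : T -> T;
  S_Sinv : forall t, S (Sinv t) = t;
  Sinv_S : forall t, Sinv (S t) = t
}.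

Definition Sn (F : biframe) (n : nat) (t : T F) : T F := Nat.iter n (S F) t.
Definition Sinvn (F : biframe) (n : nat) (t : T F) : T F := Nat.iter n (Sinv F) t.

(* A bi-relational model: a frame with a valuation on all formulas satisfying
   the semantic clauses ([[phi]] viewed as a predicate on W x T). *)
Record bimodel := {
  frame :> biframe;
  val : form -> W frame -> T frame -> Prop;
  val_var_down : forall p w v t, le frame v w -> val (Var p) w t -> val (Var p) v t;
  val_and : forall a b w t, val (And a b) w t <-> (val a w t /\ val b w t);
  val_or : forall a b w t, val (Or a b) w t <-> (val a w t \/ val b w t);
  val_imp : forall a b w t, val (Imp a b) w t <->
      (forall v, le frame v w -> val a v t -> val b v t);
  val_coimp : forall a b w t, val (Coimp a b) w t <->
      (exists v, le frame w v /\ val a v t /\ ~ val b v t);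
  val_next : forall a w t, val (Next a) w t <-> val a w (S frame t);
  val_prev : forall a w t, val (Prev a) w t <-> val a w (Sinv frame t);
  val_glob : forall a w t, val (Glob a) w t <-> (forall n, val a w (Sn frame n t));
  val_hist : forall a w t, val (Hist a) w t <-> (forall n, val a w (Sinvn frame n t));
  val_until : forall a b w t, val (Until a b) w t <->
      (exists n, (forall i, i < n -> val a w (Sn frame i t)) /\ val b w (Sn frame n t));
  val_since : forall a b w t, val (Since a b) w t <->
      (exists n, (forall i, i < n -> val a w (Sinvn frame i t)) /\ val b w (Sinvn frame n t))
}.

Definition falsifiable_on (M : bimodel) (phi : form) : Prop :=
  exists (w : W M) (t : T M), ~ val M phi w t.

Definition finite_type (X : Type) : Prop := exists l : list X, forall x, In x l.

Definition strong_FMP : Prop := forall phi,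
  (exists M, falsifiable_on M phi) ->
  exists M, falsifiable_on M phi /\ finite_type (W M) /\ finite_type (T M).
Definition order_FMP : Prop := forall phi,
  (exists M, falsifiable_on M phi) ->
  exists M, falsifiable_on M phi /\ finite_type (W M).
Definition temporal_FMP : Prop := forall phi,
  (exists M, falsifiable_on M phi) ->
  exists M, falsifiable_on M phi /\ finite_type (T M).

(* Main.v *)
Require Import Defs.
From Stdlib Require Import List Arith Lia ZArith Classical ClassicalEpsilon.

Lemma inj_not_finite (X : Type) (f : nat -> X) :
  (forall a b, f a = f b -> a = b) -> ~ finite_type X.
Proof.
  intros Hi [l Hl].
  assert (H := NoDup_incl_length (l:=map f (seq 0 (Datatypes.S (length l)))) (l' := l)).
  rewrite length_map, length_seq in H.
  enough (Datatypes.S (length l) <= length l) by lia.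
  apply H.
  - apply NoDup_map_NoDup_ForallPairs; [intros x y _ _; apply Hi| apply seq_NoDup].
  - intros x _; apply Hl.
Qed.

Section Model.
Definition leN (u v : nat) : Prop := (v <= u)%nat.

Definition fr : biframe.
Proof.
  refine {| W := nat; T := Z; le := leN; S := Z.succ; Sinv := Z.pred |};
  unfold leN; intros; try lia.
Defined.

Definition atom (w : nat) (t : Z) : Prop := (t <= Z.of_nat w)%Z.

Fixpoint ev (f : form) (w : nat) (t : Z) : Prop :=
  match f with
  | Var _ => atom w t
  | And a b => ev a w t /\ ev b w t
  | Or a b => ev a w t \/ ev b w t
  | Imp a b => forall v, leN v w -> ev a v t -> ev b v t
  | Coimp a b => exists v, leN w v /\ ev a v t /\ ~ ev b v t
  | Next a => ev a w (Z.succ t)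
  | Prev a => ev a w (Z.pred t)
  | Glob a => forall n, ev a w (Sn fr n t)
  | Hist a => forall n, ev a w (Sinvn fr n t)
  | Until a b => exists n, (forall i, i < n -> ev a w (Sn fr i t)) /\ ev b w (Sn fr n t)
  | Since a b => exists n, (forall i, i < n -> ev a w (Sinvn fr i t)) /\ ev b w (Sinvn fr n t)
  end.

Definition md : bimodel.
Proof.
  refine {| frame := fr; val := ev |}; try (intros; simpl; tauto).
  simpl; unfold atom, leN; intros; lia.
Defined.

Lemma Sn_fr n t : Sn fr n t = (t + Z.of_nat n)%Z.
Proof. induction n. simpl. lia. change (Z.succ (Sn fr n t) = (t + Z.of_nat (Datatypes.S n))%Z). rewrite IHn; lia. Qed.
End Model.

Lemma part1 p : exists M : bimodel, falsifiable_on M (Fut (Imp (Var p) (Next (Var p)))).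
Proof.
  exists md, 0, 0%Z. simpl. intros [n [_ H]].
  specialize (H n). unfold leN, atom in H. rewrite Sn_fr in H.
  assert (0 <= n)%nat by lia. specialize (H H0 ltac:(lia)). lia.
Qed.

Lemma part2 p (M : bimodel) : falsifiable_on M (Fut (Imp (Var p) (Next (Var p)))) ->
  ~ finite_type (W M) /\ ~ finite_type (T M).
Proof.
  intros [w [t0 Hn]].
  set (tt := fun n => Sn M n t0).
  assert (Hw : forall n, exists v, le M v w /\ val M (Var p) v (tt n) /\
                 ~ val M (Var p) v (tt (Datatypes.S n))).
  { intro n. apply NNPP; intro C. apply Hn. unfold Fut. rewrite val_until.
    exists n. split.
    - intros i _. unfold Top. rewrite val_imp. auto.
    - rewrite val_imp. intros v Hv Hp. rewrite val_next.
      apply NNPP; intro C2. apply C. exists v. repeat split; auto. }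
  set (vv := fun n => proj1_sig (constructive_indefinite_description _ (Hw n))).
  assert (Hp : forall n, val M (Var p) (vv n) (tt n)).
  { intro n. unfold vv. destruct constructive_indefinite_description as [v [? [? ?]]]; auto. }
  assert (Hq : forall n, ~ val M (Var p) (vv n) (tt (Datatypes.S n))).
  { intro n. unfold vv. destruct constructive_indefinite_description as [v [? [? ?]]]; auto. }
  assert (Hnl : forall n, ~ le M (vv n) (vv (Datatypes.S n))).
  { intros n Hl. apply (Hq n). eapply val_var_down; eauto. }
  assert (Hs : forall n, le M (vv (Datatypes.S n)) (vv n)).
  { intro n. destruct (le_total M (vv (Datatypes.S n)) (vv n)); auto. exfalso; eapply Hnl; eauto. }
  assert (Hch : forall i k, le M (vv (i + k)) (vv i)).
  { intros i k; induction k. rewrite Nat.add_0_r; apply le_refl.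
    rewrite Nat.add_succ_r. eapply le_trans; eauto. }
  split.
  - apply (inj_not_finite _ vv).
    assert (forall a b, a < b -> vv a <> vv b).
    { intros a b Hab E. apply (Hnl a). rewrite E.
      replace b with (Datatypes.S a + (b - Datatypes.S a)) by lia. apply Hch. }
    intros a b E. destruct (lt_eq_lt_dec a b) as [[?|?]|?]; auto.
    + exfalso; eapply H; eauto.
    + exfalso; eapply H; eauto.
  - apply (inj_not_finite _ tt).
    assert (forall a b, a < b -> tt a <> tt b).
    { intros a b Hab E. set (j := b - 1).
      apply (Hq j). replace (Datatypes.S j) with b by lia. rewrite <- E.
      eapply val_var_down; [|apply (Hp a)].
      replace j with (a + (j - a)) by lia. apply Hch. }
    intros a b E. destruct (lt_eq_lt_dec a b) as [[?|?]|?]; auto.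
    + exfalso; eapply H; eauto.
    + exfalso; eapply H; eauto.
Qed.

Theorem proposition4p2 :
  (forall p : nat,
     (exists M : bimodel, falsifiable_on M (Fut (Imp (Var p) (Next (Var p))))) /\
     (forall M : bimodel, falsifiable_on M (Fut (Imp (Var p) (Next (Var p)))) ->
        ~ finite_type (W M) /\ ~ finite_type (T M)))
  /\ ~ strong_FMP /\ ~ order_FMP /\ ~ temporal_FMP.
Proof.
  split; [intro p; split; [apply part1| apply part2]|].
  repeat split; intro H; destruct (H _ (part1 0)) as [M HM];
    destruct (part2 0 M) as [A B]; tauto.
Qed.
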